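(* Let $W_{32,23}$ be the $32\times 32$ matrix $\begin{pmatrix} A & B\\ -B^T & A^T\end{pmatrix}$, where $A$ and $B$ are $16\times 16$ negacirculant matrices with first rows $r_A=(0,1,1,0,-1,1,-1,0,0,0,-1,1,-1,0,1,1)$ and $r_B=(0,1,0,1,1,1,1,-1,0,-1,-1,1,-1,-1,-1,1)$ (a skew-symmetric weighing matrix of order $32$ and weight $23$). Let $C_3(W_{32,23})$ be the ternary code of length $64$ with generator matrix $(I\ \ W_{32,23})$, entries read modulo $3$. Then $A_3(C_3(W_{32,23}))$ contains a $k$-frame for every positive integer $k\ge 3$ that is not of the form $2^{m_1}5^{m_2}7^{m_3}23^{m_4}$ with $m_1,\dots,m_4$ non-negative integers.
   Context: An $N\times N$ negacirculant matrix with first row $(r_0,\dots,r_{N-1})$ is the matrix whose $(i,j)$ entry ($0\le i,j\le N-1$) is $r_{j-i}$ if $j\ge i$ and $-r_{N+j-i}$ if $j<i$. A skew-symmetric weighing matrix of order $n$ and weight $w$ is an $n\times n$ $(0,\pm1)$-matrix $W$ with $W^T=-W$ and $WW^T=wI$. Construction A: with $\rho:\mathbb{Z}_k\to\mathbb{Z}$ sending $0,1,\dots,k-1$ to $0,1,\dots,k-1$, for a $\mathbb{Z}_k$-code $C$ of length $N$ set $A_k(C)=\frac{1}{\sqrt{k}}\{\rho(C)+k\mathbb{Z}^N\}$. A $t$-frame of a lattice in dimension $N$ is a set of $N$ lattice vectors $f_1,\dots,f_N$ with $(f_i,f_j)=t\,\delta_{i,j}$. *)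

(* Defs.v *)
From HB Require Import structures.
From mathcomp Require Import all_boot all_order all_algebra.
From mathcomp Require Import reals.
Set Implicit Arguments. Unset Strict Implicit. Unset Printing Implicit Defensive.
Import Order.TTheory GRing.Theory Num.Theory.
Local Open Scope ring_scope.

Definition negacirc (N : nat) (r : seq int) : 'M[int]_N :=
  \matrix_(i < N, j < N)
    if (i <= j)%N then nth 0 r (j - i)%N else - nth 0 r (N + j - i)%N.

Definition rA : seq int := [:: 0; 1; 1; 0; -1; 1; -1; 0; 0; 0; -1; 1; -1; 0; 1; 1].
Definition rB : seq int := [:: 0; 1; 0; 1; 1; 1; 1; -1; 0; -1; -1; 1; -1; -1; -1; 1].

Definition matA : 'M[int]_16 := negacirc 16 rA.
Definition matB : 'M[int]_16 := negacirc 16 rB.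

Definition W32_23 : 'M[int]_32 :=
  block_mx matA matB (- matB^T) matA^T.

Definition skew_weighing (n w : nat) (W : 'M[int]_n) : Prop :=
  (forall i j, W i j \in [:: -1; 0; 1]) /\ W^T = - W /\ W *m W^T = (w%:R)%:M.

Definition mod3 (m n : nat) (M : 'M[int]_(m, n)) : 'M['Z_3]_(m, n) :=
  map_mx (fun z : int => z%:~R) M.

Definition C3 (n : nat) (W : 'M[int]_n) : 'rV['Z_3]_(n + n) -> Prop :=
  fun c => exists u : 'rV['Z_3]_n, c = u *m row_mx 1%:M (mod3 W).

Definition rho (N : nat) (c : 'rV['Z_3]_N) : 'rV[int]_N :=
  map_mx (fun a : 'Z_3 => ((val a : nat) : int)) c.

Definition constructionA3 (R : realType) (N : nat) (C : 'rV['Z_3]_N -> Prop)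
  : 'rV[R]_N -> Prop :=
  fun v => exists (c : 'rV['Z_3]_N) (z : 'rV[int]_N),
    C c /\ v = (Num.sqrt (3 : R))^-1 *: map_mx (fun a : int => a%:~R)
                                              (rho c + 3 *: z).

Definition dotv (R : realType) (N : nat) (x y : 'rV[R]_N) : R := (x *m y^T) 0 0.

Definition has_frame (R : realType) (N : nat) (L : 'rV[R]_N -> Prop) (t : R) : Prop :=
  exists f : 'I_N -> 'rV[R]_N,
    (forall i, L (f i)) /\
    (forall i j, dotv (f i) (f j) = if i == j then t else 0).

(* Main.v *)
Require Import Defs.
From HB Require Import structures.
From mathcomp Require Import all_boot all_order all_algebra.
From mathcomp Require Import reals.
From mathcomp Require Import ring lra zify.
Import Order.TTheory GRing.Theory Num.Theory.
Local Open Scope ring_scope.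

Definition na (i j : nat) : int :=
  if (i <= j)%N then nth 0 rA (j - i)%N else - nth 0 rA (16 + j - i)%N.
Definition nb (i j : nat) : int :=
  if (i <= j)%N then nth 0 rB (j - i)%N else - nth 0 rB (16 + j - i)%N.
Definition blk (n : nat) (x y z w : nat -> nat -> int) (i j : nat) : int :=
  if (i < n)%N then (if (j < n)%N then x i j else y i (j - n)%N)
  else (if (j < n)%N then z (i - n)%N j else w (i - n)%N (j - n)%N).
Definition zf (i j : nat) : int := 0.
Definition idf (i j : nat) : int := (i == j)%:R.
Definition negf (f : nat -> nat -> int) i j := - f i j.
Definition wf := blk 16 na nb (fun i j => - nb j i) (fun i j => na j i).
Definition s8 (i j : nat) : int :=
  if j == (i + 8)%N then 1 else if i == (j + 8)%N then -1 else 0.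
Definition d16 (i j : nat) : int :=
  if j == ((16 - i) %% 16)%N then (if i == 0%N then 1 else -1) else 0.
Definition s8d (i j : nat) : int :=
  s8 i ((16 - j) %% 16) * (if ((16 - j) %% 16 == 0)%N then 1 else -1).
Definition t1 := blk 16 s8 zf zf s8.
Definition t2 := blk 16 zf (negf d16) d16 zf.
Definition t3 := blk 16 zf (negf s8d) s8d zf.
Definition XX (l : nat) : nat -> nat -> int :=
  match l with
  | 0 => blk 32 idf wf wf idf
  | 1 => idf
  | 2 => blk 32 zf idf (negf idf) zf
  | 3 => blk 32 t1 zf zf (negf t1)
  | 4 => blk 32 t2 zf zf (negf t2)
  | _ => blk 32 t3 zf zf (negf t3)
  end.
Definition ee (l m : nat) : int :=
  match l, m with
  | 0, 0 => 24 | 0, 1 => 1 | 1, 0 => 1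
  | _, _ => (l == m)%:R end.
Definition sumn64 (f : nat -> int) : int := foldr (fun j acc => f j + acc) 0 (iota 0 64).
Definition Gs l m i i' :=
  sumn64 (fun j => XX l i j * XX m i' j) + sumn64 (fun j => XX m i j * XX l i' j).
Definition rowsX : seq (seq (seq int)) :=
  [seq [seq [seq XX l i j | j <- iota 0 64] | i <- iota 0 64] | l <- iota 0 6].
Definition dotl (u v : seq int) : int := foldr (fun p acc => p.1 * p.2 + acc) 0 (zip u v).
Definition gram (A B : seq (seq int)) : seq (seq int) := [seq [seq dotl a b | b <- B] | a <- A].
Definition addl (u v : seq int) := [seq p.1 + p.2 | p <- zip u v].
Definition addll (P Q : seq (seq int)) := [seq addl p.1 p.2 | p <- zip P Q].
Definition target (l m : nat) : seq (seq int) :=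
  [seq [seq 2 * ee l m * (i == j)%:R | j <- iota 0 64] | i <- iota 0 64].
Definition chk (R : seq (seq (seq int))) : bool :=
  all (fun l => all (fun m => (m < l)%N ||
     (addll (gram (nth [::] R l) (nth [::] R m)) (gram (nth [::] R m) (nth [::] R l))
       == target l m)) (iota 0 6)) (iota 0 6).
Definition check2 : bool := chk rowsX.
Lemma chk_spec R l m : chk R -> (l < 6)%N -> (m < 6)%N -> (l <= m)%N ->
  addll (gram (nth [::] R l) (nth [::] R m)) (gram (nth [::] R m) (nth [::] R l)) = target l m.
Proof.
move=> C hl hm hlm.
have hl' : l \in iota 0 6 by rewrite mem_iota.
have hm' : m \in iota 0 6 by rewrite mem_iota.
have C1 := allP C l hl'.
have C2 := allP C1 m hm'.
have F : (m < l)%N = false by rewrite ltnNge hlm.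
by rewrite F orFb in C2; apply/eqP.
Qed.
Lemma check2_ok : check2.
Proof. vm_cast_no_check (erefl true). Qed.

Lemma dotl_map (f g : nat -> int) s :
  dotl [seq f j | j <- s] [seq g j | j <- s] = foldr (fun j acc => f j * g j + acc) 0 s.
Proof. by elim: s => //= a s; rewrite /dotl /= => ->. Qed.

Lemma nth_rowsX l i j : (l < 6)%N -> (i < 64)%N -> (j < 64)%N ->
  nth 0 (nth [::] (nth [::] rowsX l) i) j = XX l i j.
Proof.
move=> hl hi hj; rewrite /rowsX (nth_map 0%N) ?size_iota // nth_iota //.
by rewrite (nth_map 0%N) ?size_iota // nth_iota // (nth_map 0%N) ?size_iota // nth_iota.
Qed.

Lemma rowsX_row l i : (l < 6)%N -> (i < 64)%N ->
  nth [::] (nth [::] rowsX l) i = [seq XX l i j | j <- iota 0 64].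
Proof.
move=> hl hi; rewrite /rowsX (nth_map 0%N) ?size_iota // nth_iota //.
by rewrite (nth_map 0%N) ?size_iota // nth_iota.
Qed.

Lemma size_rowsX l : (l < 6)%N -> size (nth [::] rowsX l) = 64%N.
Proof. by move=> hl; rewrite /rowsX (nth_map 0%N) ?size_iota // size_map size_iota. Qed.

Lemma nth_gram A B i i' : (i < size A)%N -> (i' < size B)%N ->
  nth 0 (nth [::] (gram A B) i) i' = dotl (nth [::] A i) (nth [::] B i').
Proof. by move=> hi hi'; rewrite /gram (nth_map [::]) // (nth_map [::]). Qed.

Lemma nth_addll P Q i i' : size P = size Q -> (i < size P)%N ->
  size (nth [::] P i) = size (nth [::] Q i) -> (i' < size (nth [::] P i))%N ->
  nth 0 (nth [::] (addll P Q) i) i' = nth 0 (nth [::] P i) i' + nth 0 (nth [::] Q i) i'.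
Proof.
move=> hs hi hs' hi'.
rewrite /addll (nth_map ([::], [::])) ?size_zip ?hs ?minnn -?hs // nth_zip //=.
by rewrite /addl (nth_map (0, 0)) ?size_zip ?hs' ?minnn -?hs' // nth_zip.
Qed.

Definition sumn64' (f : nat -> int) := foldr (fun j acc => f j + acc) 0 (iota 0 64).

Lemma ee_sym l m : ee l m = ee m l.
Proof. by case: l => [|[|l]]; case: m => [|[|m]] //=; rewrite eq_sym. Qed.

Lemma gram_ok l m i i' : (l < 6)%N -> (m < 6)%N -> (i < 64)%N -> (i' < 64)%N ->
  Gs l m i i' = 2 * ee l m * (i == i')%:R.
Proof.
wlog hlm : l m / (l <= m)%N.
  move=> H hl hm hi hi'; case: (leqP l m) => h; first exact: H.
  have := H m l (ltnW h) hm hl hi hi'; rewrite /Gs ee_sym => <-; exact: addrC.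
move=> hl hm hi hi'.
rewrite /Gs /sumn64.
have E := @chk_spec rowsX l m check2_ok hl hm hlm.
have := congr1 (fun P => nth 0 (nth [::] P i) i') E.
rewrite nth_addll; first last.
- by rewrite (nth_map [::]) ?size_rowsX // size_map size_rowsX.
- by rewrite !(nth_map [::]) ?size_rowsX // !size_map !size_rowsX.
- by rewrite size_map size_rowsX.
- by rewrite /gram !size_map !size_rowsX.
rewrite !nth_gram ?size_rowsX // !rowsX_row // !dotl_map => ->.
rewrite /target (nth_map 0%N) ?size_iota // nth_iota // (nth_map 0%N) ?size_iota //.
by rewrite nth_iota.
Qed.

Definition sum32 (f : nat -> int) : int := foldr (fun j acc => f j + acc) 0 (iota 0 32).
Definition check3 : bool :=
  all (fun i => all (fun j => (3 %| XX 0 i (32 + j) - sum32 (fun k => XX 0 i k * wf k j))%Z)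
    (iota 0 32)) (iota 0 64).
Lemma check3_ok : check3.
Proof. vm_cast_no_check (erefl true). Qed.

Lemma W_E (i j : 'I_32) : W32_23 i j = wf i j.
Proof.
have F x : (16 + x < 16)%N = false by rewrite ltnNge leq_addr.
rewrite /W32_23 /block_mx /col_mx /row_mx !mxE.
case: (@splitP 16 16 i) => i1 hi; rewrite mxE; case: (@splitP 16 16 j) => j1 hj;
  rewrite !mxE /wf /blk hi hj ?ltn_ord ?F ?addKn //.
Qed.

Lemma bigfoldr (s : seq nat) (F : nat -> int) :
  \sum_(j <- s) F j = foldr (fun j acc => F j + acc) 0 s.
Proof. by elim: s => [|x s IH]; rewrite ?big_nil ?big_cons ?IH. Qed.

Lemma big64 (F : nat -> int) : \sum_(j < 64) F j = sumn64 F.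
Proof. by rewrite -(big_mkord xpredT F) bigfoldr. Qed.

Definition Mf (p : nat -> int) (i j : nat) : int := \sum_(l < 6) p l * XX l i j.

Lemma gramM p (i i' : nat) : (i < 64)%N -> (i' < 64)%N ->
  2 * \sum_(j < 64) Mf p i j * Mf p i' j =
  \sum_(l < 6) \sum_(m < 6) p l * p m * (2 * ee l m * (i == i')%:R).
Proof.
move=> hi hi'.
have E1 : \sum_(j < 64) Mf p i j * Mf p i' j =
   \sum_(l < 6) \sum_(m < 6) p l * p m * \sum_(j < 64) XX l i j * XX m i' j.
  rewrite /Mf.
  under eq_bigr => j _ do rewrite big_distrl /=.
  under eq_bigr => j _ do under eq_bigr => l _ do rewrite big_distrr /=.
  rewrite exchange_big; apply: eq_bigr => l _.
  rewrite exchange_big; apply: eq_bigr => m _.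
  rewrite big_distrr; apply: eq_bigr => j _ /=; ring.
rewrite E1 mulr2n mulrDl mul1r.
rewrite {2}exchange_big -big_split /=; apply: eq_bigr => l _.
rewrite -big_split /=; apply: eq_bigr => m _.
rewrite -(@gram_ok l m i i' (ltn_ord l) (ltn_ord m) hi hi') /Gs -!big64 [p m * p l]mulrC.
by rewrite -mulrDr.
Qed.

Definition pv (a c d1 d2 d3 d4 : int) (l : nat) : int :=
  match l with 0 => a | 1 => 3 * c | 2 => 3 * d1 | 3 => 3 * d2 | 4 => 3 * d3 | _ => 3 * d4 end.

Lemma quadE (a c d1 d2 d3 d4 : int) (b : int) :
  \sum_(l < 6) \sum_(m < 6) pv a c d1 d2 d3 d4 l * pv a c d1 d2 d3 d4 m * (2 * ee l m * b)
  = 2 * ((24 * a * a + 6 * a * c + 9 * c * c + 9 * (d1 * d1 + d2 * d2 + d3 * d3 + d4 * d4)) * b).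
Proof.
rewrite !big_ord_recl !big_ord0 /=.
rewrite /ee /pv /=.
ring.
Qed.

Lemma Z3_int (x : int) : x = ((val (x%:~R : 'Z_3) : nat) : int) + 3 * (x %/ 3)%Z.
Proof.
have hr0 : (0 <= (x %% 3)%Z) := @modz_ge0 x 3 isT.
have hr3 : ((x %% 3)%Z < 3) := @ltz_pmod x 3 isT.
have [n hn] : exists n : nat, (x %% 3)%Z = n by exists `|(x %% 3)%Z|%N; rewrite gez0_abs.
have hx : (x%:~R : 'Z_3) = n%:R.
  rewrite {1}(divz_eq x 3) hn intrD intrM.
  have -> : ((3 : int)%:~R : 'Z_3) = 0 by apply: val_inj.
  by rewrite mulr0 add0r.
have V : (val (n%:R : 'Z_3) : nat) = (n %% 3)%N := @val_Zp_nat 3 isT n.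
rewrite hx V modn_small; last by rewrite hn in hr3; lia.
by rewrite -hn {1}(divz_eq x 3); ring.
Qed.

Lemma Mf_split a c d1 d2 d3 d4 i j : Mf (pv a c d1 d2 d3 d4) i j =
  a * XX 0 i j + 3 * (c * XX 1 i j + d1 * XX 2 i j + d2 * XX 3 i j + d3 * XX 4 i j + d4 * XX 5 i j).
Proof. rewrite /Mf !big_ord_recl big_ord0 /= /pv /=; ring. Qed.

Lemma Z3_eq (x y : int) : (3 %| x - y)%Z -> (x%:~R : 'Z_3) = y%:~R.
Proof.
move=> /dvdzP [q hq]; apply/eqP; rewrite -subr_eq0 -intrB hq intrM.
have -> : ((3 : int)%:~R : 'Z_3) = 0 by apply: val_inj.
by rewrite mulr0.
Qed.

Lemma big32 (F : nat -> int) : \sum_(j < 32) F j = sum32 F.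
Proof. by rewrite -(big_mkord xpredT F) bigfoldr. Qed.

Lemma mod3_row p i (j : 'I_32) : (i < 64)%N ->
  (exists a c d1 d2 d3 d4, p = pv a c d1 d2 d3 d4) ->
  (3 %| Mf p i (32 + j) - \sum_(k < 32) Mf p i k * W32_23 k j)%Z.
Proof.
move=> hi [a [c [d1 [d2 [d3 [d4 ->]]]]]].
under eq_bigr => k _ do rewrite W_E Mf_split.
rewrite Mf_split.
have H0 : (3 %| XX 0 i (32 + j) - \sum_(k < 32) XX 0 i k * wf k j)%Z.
  rewrite (big32 (fun k => XX 0 i k * wf k j)).
  have C := check3_ok; rewrite /check3 in C.
  have hi' : i \in iota 0 64 by rewrite mem_iota.
  have hj' : (j : nat) \in iota 0 32 by rewrite mem_iota /=.
  exact: (allP (allP C i hi') j hj').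
set S := \sum_(k < 32) _.
have -> : S = a * \sum_(k < 32) XX 0 i k * wf k j + 3 * \sum_(k < 32)
   (c * XX 1 i k + d1 * XX 2 i k + d2 * XX 3 i k + d3 * XX 4 i k + d4 * XX 5 i k) * wf k j.
  rewrite /S !big_distrr -big_split /=; apply: eq_bigr => k _; ring.
set T := (c * _ + _ + _ + _ + _).
set V := \sum_(k < 32) XX 0 i k * wf k j.
set U := \sum_(k < 32) (c * _ + _ + _ + _ + _) * wf k j.
have -> : a * XX 0 i (32 + j) + 3 * T - (a * V + 3 * U)
   = a * (XX 0 i (32 + j) - V) + 3 * (T - U) by ring.
apply: rpredD; first exact: dvdz_mull.
by apply: dvdz_mulr; rewrite dvdzz.
Qed.

Lemma frame_of (R : realType) (k : nat) a c d1 d2 d3 d4 :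
  (3 * k)%:R = 24*a*a + 6*a*c + 9*c*c + 9*(d1*d1+d2*d2+d3*d3+d4*d4) :> int ->
  @has_frame R 64 (@constructionA3 R 64 (C3 W32_23)) (k%:R).
Proof.
move=> hk; set p := pv a c d1 d2 d3 d4.
have hp : exists a' c' e1 e2 e3 e4, p = pv a' c' e1 e2 e3 e4 by do 6 eexists.
pose s : R := Num.sqrt 3.
exists (fun i : 'I_64 => s^-1 *: \row_(j < 64) ((Mf p i j)%:~R : R)).
split.
- move=> i.
  pose c0 : 'rV['Z_3]_(32 + 32) := \row_(j < 64) ((Mf p i j)%:~R : 'Z_3).
  exists c0, (\row_(j < 64) ((Mf p i j) %/ 3)%Z).
  split.
  + exists (lsubmx c0); rewrite mul_mx_row mulmx1 -{1}(hsubmxK c0); congr row_mx.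
    apply/rowP => j; rewrite /mod3.
    rewrite [RHS]mxE /c0.
    under eq_bigr => l _ do rewrite [map_mx _ _ _ _]mxE [lsubmx _ _ _]mxE mxE.
    rewrite mxE.
    have -> : \sum_(l < 32) ((Mf p i l)%:~R * (W32_23 l j)%:~R : 'Z_3) =
       (\sum_(l < 32) Mf p i l * W32_23 l j)%:~R.
      by rewrite rmorph_sum; apply: eq_bigr => l _; rewrite rmorphM.
    rewrite [LHS]mxE; apply: Z3_eq; exact: mod3_row.
  + apply/rowP => j; rewrite !mxE.
    by rewrite -Z3_int.
- move=> i j; rewrite /dotv mxE.
  under eq_bigr => l _ do rewrite !mxE.
  have G : \sum_(l < 64) Mf p i l * Mf p j l = (3 * k)%:R * ((i : nat) == j)%:R.
    apply: (@mulfI _ 2) => //; by rewrite gramM // quadE hk.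
  rewrite (eq_bigr (fun l : 'I_64 => s^-1 * s^-1 * (Mf p i l * Mf p j l)%:~R)); last first.
    by move=> l _; rewrite rmorphM /=; ring.
  rewrite -mulr_sumr -rmorph_sum G.
  have s2 : s * s = 3 by rewrite -expr2 sqr_sqrtr.
  have s0 : s != 0 by apply/eqP => h; move: s2; rewrite h mulr0 => /eqP; rewrite eq_sym pnatr_eq0.
  case: (i =P j) => [->|/eqP hij]; rewrite ?eqxx.
  + rewrite mulr1 natrM rmorphM /=.
    have h3 : (3%:~R : R) = s * s by rewrite s2.
    rewrite h3 mulrz_nat; field; exact: s0.
  + have -> : ((i : nat) == j) = false by apply/negbTE.
    by rewrite mulr0 rmorph0 mulr0.
Qed.

Lemma sq_inj p x y : prime p -> (2 * x < p)%N -> (2 * y < p)%N ->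
  ((x * x) %% p = (y * y) %% p)%N -> x = y.
Proof.
move=> hp; wlog hxy : x y / (y <= x)%N.
  move=> H hx hy E; case: (leqP y x) => h; first exact: H.
  by apply/esym/H => //; apply: ltnW.
move=> hx hy E.
have hd : (p %| x * x - y * y)%N.
  by rewrite -eqn_mod_dvd ?E // leq_mul.
move: hd; have -> : (x * x - y * y = (x - y) * (x + y))%N by nia.
rewrite Euclid_dvdM // => /orP [] hd.
- case: (posnP (x - y)) => h0; first by lia.
  have := dvdn_leq h0 hd; lia.
- case: (posnP (x + y)) => h0; first by lia.
  have := dvdn_leq h0 hd; lia.
Qed.

Lemma sq_sum_mod p : prime p -> odd p ->
  exists x y m : nat, [/\ (2 * x < p)%N, (2 * y < p)%N & (x * x + y * y + 1 = m * p)%N].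
Proof.
move=> hp hodd.
have hp1 := prime_gt1 hp.
set h := p./2.
have hph : p = (2 * h).+1 by have := odd_double_half p; rewrite hodd -/h; lia.
pose A := [seq ((x * x) %% p)%N | x <- iota 0 h.+1].
pose B := [seq (p.-1 - (y * y) %% p)%N | y <- iota 0 h.+1].
have hlt z : z \in iota 0 h.+1 -> (2 * z < p)%N by rewrite mem_iota; lia.
have uA : uniq A.
  rewrite map_inj_in_uniq ?iota_uniq // => x y hx hy E.
  exact: (@sq_inj p x y hp (hlt x hx) (hlt y hy) E).
have uB : uniq B.
  rewrite map_inj_in_uniq ?iota_uniq // => x y hx hy E.
  apply: (@sq_inj p x y hp (hlt x hx) (hlt y hy)); move: E => /=.
  have := ltn_pmod (x * x) (ltnW hp1); have := ltn_pmod (y * y) (ltnW hp1); lia.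
have : has (mem B) A.
  apply/negPn/negP => hn.
  have u : uniq (A ++ B) by rewrite cat_uniq uA uB has_sym hn.
  have sub : {subset A ++ B <= iota 0 p}.
    move=> z; rewrite mem_cat mem_iota => /orP [] /mapP [x _ ->].
    - by rewrite ltn_pmod // ltnW.
    - lia.
  have := uniq_leq_size u sub; rewrite size_cat !size_map !size_iota; lia.
case/hasP => z /mapP [x hx ->] /mapP [y hy E].
exists x, y, ((x * x) %/ p + (y * y) %/ p + 1)%N; split; [exact: hlt|exact: hlt|].
have := divn_eq (x * x) p; have := divn_eq (y * y) p.
have := ltn_pmod (y * y) (ltnW hp1); lia.
Qed.

Definition s4 (n : int) := exists a b c d : int, n = a*a + b*b + c*c + d*d.

Lemma s4_mul x y : s4 x -> s4 y -> s4 (x * y).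
Proof.
move=> [a [b [c [d ->]]]] [e [f [g [h ->]]]].
exists (a*e+b*f+c*g+d*h), (a*f-b*e+c*h-d*g), (a*g-b*h-c*e+d*f), (a*h+b*g-c*f-d*e).
ring.
Qed.

Lemma nodiv (p m : nat) (W : int) : prime p -> (1 < m)%N -> (m < p)%N ->
  p%:Z = m%:Z * W -> False.
Proof.
move=> hp hm1 hmp E.
have hd : (m%:Z %| p%:Z)%Z by apply/dvdzP; exists W; rewrite mulrC.
rewrite dvdzE /= in hd.
have hm1' : m != 1%N by rewrite neq_ltn hm1 orbT.
have := (prime_nt_dvdP hp hm1'); move/(_ hd) => hmp'; lia.
Qed.

Lemma round_bound (x M : int) : 0 < M ->
  let y := x - M * ((2 * x + M) %/ (2 * M))%Z in - M <= 2 * y /\ 2 * y < M.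
Proof.
move=> hM /=.
have h2 : (2 * M != 0) by lia.
have := divz_eq (2 * x + M) (2 * M).
have := @modz_ge0 (2 * x + M) (2 * M) h2.
have := @ltz_pmod (2 * x + M) (2 * M) ltac:(lia).
set q := ((2 * x + M) %/ (2 * M))%Z; set r := ((2 * x + M) %% (2 * M))%Z.
nia.
Qed.

Lemma sq_bound (u M : int) : - M <= 2 * u -> 2 * u < M -> 4 * (u * u) <= M * M.
Proof. nia. Qed.

Lemma sq_ge0 (u : int) : 0 <= u * u.
Proof. nia. Qed.

Lemma pos_of_mul (M r : int) : 0 < M -> 0 <= M * r -> 0 <= r.
Proof. nia. Qed.

Lemma le_of_mul (M r : int) : 0 < M -> M * r <= M * M -> r <= M.
Proof. nia. Qed.

Lemma sq_eq0 (u : int) : u * u = 0 -> u = 0.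
Proof. nia. Qed.

Lemma half_neg (u M : int) : 4 * (u * u) = M * M -> 2 * u < M -> 0 < M -> 2 * u = - M.
Proof. nia. Qed.

Lemma descent (p m : nat) : prime p -> (1 < m)%N -> (m < p)%N -> s4 (m%:Z * p%:Z) ->
  exists r : nat, (0 < r)%N /\ (r < m)%N /\ s4 (r%:Z * p%:Z).
Proof.
move=> hp hm1 hmp [x1 [x2 [x3 [x4 hx]]]].
set M := m%:Z; set P := p%:Z.
have hM : 0 < M by rewrite /M; lia.
pose t x := ((2 * x + M) %/ (2 * M))%Z.
have [b1 b1'] := @round_bound x1 M hM; have [b2 b2'] := @round_bound x2 M hM.
have [b3 b3'] := @round_bound x3 M hM; have [b4 b4'] := @round_bound x4 M hM.
move: b1 b1' b2 b2' b3 b3' b4 b4'.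
rewrite -/(t x1) -/(t x2) -/(t x3) -/(t x4).
set t1 := t x1; set t2 := t x2; set t3 := t x3; set t4 := t x4.
set y1 := x1 - M * t1; set y2 := x2 - M * t2; set y3 := x3 - M * t3; set y4 := x4 - M * t4.
move=> b1 b1' b2 b2' b3 b3' b4 b4'.
set r := P - 2 * (x1 * t1 + x2 * t2 + x3 * t3 + x4 * t4) + M * (t1*t1 + t2*t2 + t3*t3 + t4*t4).
have hy : y1*y1 + y2*y2 + y3*y3 + y4*y4 = M * r.
  rewrite /y1 /y2 /y3 /y4 /r. 
  have -> : M * (P - 2 * (x1 * t1 + x2 * t2 + x3 * t3 + x4 * t4) +
     M * (t1 * t1 + t2 * t2 + t3 * t3 + t4 * t4)) = M * P - 2 * M * (x1 * t1 + x2 * t2 + x3 * t3 + x4 * t4) +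
     M * M * (t1 * t1 + t2 * t2 + t3 * t3 + t4 * t4) by ring.
  rewrite hx; ring.
have q1 := @sq_bound y1 M b1 b1'.
have q2 := @sq_bound y2 M b2 b2'.
have q3 := @sq_bound y3 M b3 b3'.
have q4 := @sq_bound y4 M b4 b4'.
have z1 := sq_ge0 y1; have z2 := sq_ge0 y2; have z3 := sq_ge0 y3; have z4 := sq_ge0 y4.
move: hy q1 q2 q3 q4 z1 z2 z3 z4.
set Y1 := y1 * y1; set Y2 := y2 * y2; set Y3 := y3 * y3; set Y4 := y4 * y4.
move=> hy q1 q2 q3 q4 z1 z2 z3 z4.
have hr0 : 0 <= r by apply: (@pos_of_mul M r hM); rewrite -hy; lia.
have hrM : r <= M by apply: (@le_of_mul M r hM); lia.
have [r0|rpos] := eqVneq r 0.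
  exfalso; rewrite r0 mulr0 in hy.
  have e1 : y1 = 0 by apply: sq_eq0; rewrite -/Y1; lia.
  have e2 : y2 = 0 by apply: sq_eq0; rewrite -/Y2; lia.
  have e3 : y3 = 0 by apply: sq_eq0; rewrite -/Y3; lia.
  have e4 : y4 = 0 by apply: sq_eq0; rewrite -/Y4; lia.
  apply: (@nodiv p m (t1*t1 + t2*t2 + t3*t3 + t4*t4) hp hm1 hmp).
  apply: (@mulfI _ M); first by lia.
  rewrite -/M -/P hx.
  have -> : x1 = M * t1 by rewrite -[x1](subrK (M * t1)) -/y1 e1 add0r.
  have -> : x2 = M * t2 by rewrite -[x2](subrK (M * t2)) -/y2 e2 add0r.
  have -> : x3 = M * t3 by rewrite -[x3](subrK (M * t3)) -/y3 e3 add0r.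
  have -> : x4 = M * t4 by rewrite -[x4](subrK (M * t4)) -/y4 e4 add0r.
  ring.
have [rM|rltM] := eqVneq r M.
  exfalso; rewrite rM in hy.
  have e1 : 2 * y1 = - M by apply: half_neg => //; rewrite -/Y1; lia.
  have e2 : 2 * y2 = - M by apply: half_neg => //; rewrite -/Y2; lia.
  have e3 : 2 * y3 = - M by apply: half_neg => //; rewrite -/Y3; lia.
  have e4 : 2 * y4 = - M by apply: half_neg => //; rewrite -/Y4; lia.
  apply: (@nodiv p m (t1*t1 + t2*t2 + t3*t3 + t4*t4 - (t1 + t2 + t3 + t4) + 1) hp hm1 hmp).
  apply: (@mulfI _ (4 * M)); first by lia.
  rewrite -/M -/P.
  have -> : 4 * M * P = 4 * (M * P) by ring.
  rewrite hx.
  have f1 : 2 * x1 = - M + 2 * M * t1 by rewrite -e1 /y1; ring.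
  have f2 : 2 * x2 = - M + 2 * M * t2 by rewrite -e2 /y2; ring.
  have f3 : 2 * x3 = - M + 2 * M * t3 by rewrite -e3 /y3; ring.
  have f4 : 2 * x4 = - M + 2 * M * t4 by rewrite -e4 /y4; ring.
  have -> : 4 * (x1 * x1 + x2 * x2 + x3 * x3 + x4 * x4) =
    (2 * x1) * (2 * x1) + (2 * x2) * (2 * x2) + (2 * x3) * (2 * x3) + (2 * x4) * (2 * x4) by ring.
  rewrite f1 f2 f3 f4; ring.
have hr1 : 0 < r by lia.
have hr2 : r < M by lia.
exists `|r|%N; split; first by lia.
split; first by rewrite /M in hr2; lia.
have -> : (`|r|%N)%:Z = r by lia.
set w1 := P - (x1 * t1 + x2 * t2 + x3 * t3 + x4 * t4).
set w2 := - x1 * t2 + x2 * t1 - x3 * t4 + x4 * t3.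
set w3 := - x1 * t3 + x2 * t4 + x3 * t1 - x4 * t2.
set w4 := - x1 * t4 - x2 * t3 + x3 * t2 + x4 * t1.
exists w1, w2, w3, w4.
apply: (@mulfI _ (M * M)); first by lia.
have Ew1 : M * w1 = x1 * y1 + x2 * y2 + x3 * y3 + x4 * y4.
  rewrite /w1 mulrBr hx /y1 /y2 /y3 /y4; ring.
have E : M * M * (w1 * w1 + w2 * w2 + w3 * w3 + w4 * w4) =
  (x1*x1 + x2*x2 + x3*x3 + x4*x4) * (y1*y1 + y2*y2 + y3*y3 + y4*y4).
  have -> : M * M * (w1 * w1 + w2 * w2 + w3 * w3 + w4 * w4) =
    (M * w1) * (M * w1) + (M * w2) * (M * w2) + (M * w3) * (M * w3) + (M * w4) * (M * w4) by ring.
  rewrite Ew1 /w2 /w3 /w4 /y1 /y2 /y3 /y4; ring.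
rewrite E -hx /Y1 /Y2 /Y3 /Y4 hy; ring.
Qed.

Lemma s4_prime_aux (p : nat) : prime p -> forall m : nat, (0 < m)%N -> (m < p)%N ->
  s4 (m%:Z * p%:Z) -> s4 p%:Z.
Proof.
move=> hp m; elim/ltn_ind: m => m IH hm0 hmp hs.
case: (ltnP 1 m) => hm1.
  have [r [hr0 [hrm hr]]] := @descent p m hp hm1 hmp hs.
  exact: (IH r hrm hr0 (ltn_trans hrm hmp) hr).
have hm : m = 1%N by lia.
by move: hs; rewrite hm mul1r.
Qed.

Lemma s4_prime (p : nat) : prime p -> s4 p%:Z.
Proof.
move=> hp.
case: (even_prime hp) => [->|hodd].
  by exists 1, 1, 0, 0.
have [x [y [m [hx hy E]]]] := @sq_sum_mod p hp hodd.
have hp1 := prime_gt1 hp.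
have hm0 : (0 < m)%N by case: m E => //=; rewrite mul0n addn1.
have hmp : (m < p)%N by nia.
apply: (@s4_prime_aux p hp m hm0 hmp).
exists x%:Z, y%:Z, 1, 0.
have E' : ((x * x + y * y + 1)%N%:Z = (m * p)%N%:Z) by rewrite E.
move: E'; rewrite !PoszD !PoszM => <-; ring.
Qed.

Lemma four_sq (n : nat) : exists a b c d : int, n%:Z = a*a+b*b+c*c+d*d.
Proof.
elim/ltn_ind: n => n IH.
case: (ltnP 1 n) => hn.
  have [q hq hqn] := pdivP hn.
  have hq1 := prime_gt1 hq.
  have hn' : n = (q * (n %/ q))%N by rewrite mulnC divnK.
  have hlt : (n %/ q < n)%N by apply: ltn_Pdiv => //; lia.
  have [a [b [c [d E]]]] := IH _ hlt.
  have := @s4_mul q%:Z (n %/ q)%N%:Z (@s4_prime q hq) (ex_intro _ a (ex_intro _ b (ex_intro _ c (ex_intro _ d E)))).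
  by rewrite -PoszM -hn'.
case: n hn {IH} => [|[|n]] // _.
  by exists 0, 0, 0, 0.
by exists 1, 0, 0, 0.
Qed.

Theorem lemma7p1 (R : realType) (k : nat) :
  (3 <= k)%N ->
  ~ (exists m1 m2 m3 m4 : nat, k = (2 ^ m1 * 5 ^ m2 * 7 ^ m3 * 23 ^ m4)%N) ->
  @has_frame R 64 (@constructionA3 R 64 (C3 W32_23)) (k%:R).
Proof.
move=> hk3 hnot.
have hk : (k = 3 * (k %/ 3) + k %% 3)%N by rewrite mulnC -divn_eq.
have hm : (k %% 3 < 3)%N by rewrite ltn_mod.
move: hk hm; set q := (k %/ 3)%N; set r := (k %% 3)%N.
case: r => [|[|[|r]]] // hk _.
- have [d1 [d2 [d3 [d4 hN]]]] := four_sq q.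
  apply: (@frame_of R k 0 0 d1 d2 d3 d4).
  rewrite -hN hk; lia.
- case: (ltnP k 13) => hk13.
  + exfalso; apply: hnot.
    have : (k = 4 \/ k = 7 \/ k = 10)%N by lia.
    case=> [->|[->|->]].
    * by exists 2%N, 0%N, 0%N, 0%N.
    * by exists 0%N, 0%N, 1%N, 0%N.
    * by exists 1%N, 1%N, 0%N, 0%N.
  + have [d1 [d2 [d3 [d4 hN]]]] := four_sq (q - 4)%N.
    apply: (@frame_of R k 1 1 d1 d2 d3 d4).
    rewrite -hN; lia.
- case: (ltnP k 8) => hk8.
  + exfalso; apply: hnot.
    have -> : k = 5%N by lia.
    by exists 0%N, 1%N, 0%N, 0%N.
  + have [d1 [d2 [d3 [d4 hN]]]] := four_sq (q - 2)%N.
    apply: (@frame_of R k 1 0 d1 d2 d3 d4).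
    rewrite -hN; lia.
Qed.
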